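(* Let $J=\begin{bmatrix}0&I_m\\-I_m&0\end{bmatrix}$, let $H\in\mathbb{R}^{2m\times2m}$ be symmetric positive definite, and let $A=JH$, $y_0\in\mathbb{R}^{2m}$. Let $V_n\in\mathbb{R}^{2m\times n}$ be the matrix whose columns are the $H$-orthonormal basis of the Krylov subspace $\mathcal{K}_n(A,y_0)=\mathrm{span}\{y_0,Ay_0,\dots,A^{n-1}y_0\}$ produced by the Arnoldi algorithm run with the inner product $\langle x,y\rangle_H=x^THy$ (so $V_n^THV_n=I_n$), and let $H_n=V_n^THAV_n$ be the corresponding $n\times n$ upper Hessenberg matrix. Define $y_H(t)=V_nz(t)$, where $\dot z=H_nz$, $z(0)=V_n^THy_0$. Then for every $k=0,1,\dots,r$ with $r=\lfloor n/2\rfloor-1$, the quantity $$\mathcal{H}_k(y_H)=\tfrac12\, y_H^T H V_n (H_n)^{2k} V_n^T H y_H$$ is constant in $t$ along $y_H(t)$.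
   Context: The Arnoldi algorithm with inner product $\langle\cdot,\cdot\rangle_H$: $v_1=y_0/\langle y_0,y_0\rangle_H^{1/2}$; for $j=1,\dots,n$: $w_j=Av_j$, $h_{i,j}=\langle v_i,w_j\rangle_H$ and $w_j\leftarrow w_j-h_{i,j}v_i$ for $i\le j$, $h_{j+1,j}=\langle w_j,w_j\rangle_H^{1/2}$, $v_{j+1}=w_j/h_{j+1,j}$ (assumed no breakdown). $V_n=[v_1,\dots,v_n]$, $H_n=(h_{i,j})_{i,j\le n}$, and $AV_n=V_nH_n+h_{n+1,n}v_{n+1}e_n^T$ with $V_n^THv_{n+1}=0$. *)

(* Defs.v *)
(* real matrices/vectors are represented as functions on nat
   indices (0-based); only indices below the relevant dimension are ever used. *)
From Stdlib Require Import Reals List Arith.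
Open Scope R_scope.

Fixpoint sumR (n : nat) (f : nat -> R) : R :=
  match n with O => 0 | S k => sumR k f + f k end.

Definition Vec := nat -> R.
Definition Mat := nat -> nat -> R.

Definition dot (N : nat) (x y : Vec) : R := sumR N (fun i => x i * y i).
Definition mv (N : nat) (M : Mat) (x : Vec) : Vec :=
  fun i => sumR N (fun j => M i j * x j).
Definition mm (K : nat) (A B : Mat) : Mat :=
  fun i j => sumR K (fun l => A i l * B l j).
Definition tr (M : Mat) : Mat := fun i j => M j i.
Definition idm : Mat := fun i j => if Nat.eqb i j then 1 else 0.
Fixpoint mpow (K : nat) (M : Mat) (p : nat) : Mat :=
  match p with O => idm | S q => mm K M (mpow K M q) end.

(* J = [[0, I_m], [-I_m, 0]] *)
Definition Jmat (m : nat) : Mat := fun i j =>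
  if (i <? m)%nat then (if Nat.eqb j (i + m) then 1 else 0)
  else if (i <? 2 * m)%nat then (if Nat.eqb j (i - m) then -1 else 0)
  else 0.

Definition symmetric (N : nat) (M : Mat) : Prop :=
  forall i j, (i < N)%nat -> (j < N)%nat -> M i j = M j i.
Definition pos_def (N : nat) (M : Mat) : Prop :=
  forall x : Vec, (exists i, (i < N)%nat /\ x i <> 0) -> 0 < dot N x (mv N M x).

Definition ipH (N : nat) (H : Mat) (x y : Vec) : R := dot N x (mv N H y).
Definition vsub (x y : Vec) : Vec := fun i => x i - y i.
Definition vscale (a : R) (x : Vec) : Vec := fun i => a * x i.
Definition vzero : Vec := fun _ => 0.

(* modified Gram-Schmidt step of Arnoldi: for i = 1..j,
   h_{i,j} = <v_i, w>_H ; w <- w - h_{i,j} v_i *)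
Fixpoint mgs (N : nat) (H : Mat) (vs : list Vec) (w : Vec) : Vec :=
  match vs with
  | nil => w
  | v :: vs' => mgs N H vs' (vsub w (vscale (ipH N H v w) v))
  end.

Definition arnoldi_w (N : nat) (A H : Mat) (vs : list Vec) : Vec :=
  mgs N H vs (mv N A (last vs vzero)).

(* arnoldi N A H y0 j = [v_1; ...; v_{j+1}] *)
Fixpoint arnoldi (N : nat) (A H : Mat) (y0 : Vec) (j : nat) : list Vec :=
  match j with
  | O => vscale (/ sqrt (ipH N H y0 y0)) y0 :: nil
  | S j' => let vs := arnoldi N A H y0 j' in
            let w := arnoldi_w N A H vs in
            vs ++ (vscale (/ sqrt (ipH N H w w)) w :: nil)
  end.

(* no breakdown: y0 <> 0 and h_{j+1,j} <> 0 for j = 1..n-1 *)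
Definition no_breakdown (N n : nat) (A H : Mat) (y0 : Vec) : Prop :=
  ipH N H y0 y0 <> 0 /\
  forall j, (j + 1 < n)%nat ->
    ipH N H (arnoldi_w N A H (arnoldi N A H y0 j))
            (arnoldi_w N A H (arnoldi N A H y0 j)) <> 0.

Section Setup.
Variables (m n : nat) (H : Mat) (y0 : Vec).
Definition Ndim : nat := 2 * m.
Definition Amat : Mat := mm Ndim (Jmat m) H.
(* V_n : 2m x n, column j (0-based) is v_{j+1} *)
Definition Vn : Mat := fun i j =>
  nth j (arnoldi Ndim Amat H y0 (n - 1)) vzero i.
Definition Hn : Mat := mm Ndim (mm Ndim (tr Vn) H) (mm Ndim Amat Vn).
Definition z0 : Vec := mv Ndim (mm Ndim (tr Vn) H) y0.
Definition yH (z : Vec) : Vec := fun i => sumR n (fun j => Vn i j * z j).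
Definition Hk (k : nat) (y : Vec) : R :=
  / 2 * dot Ndim y
    (mv Ndim (mm n (mm n (mm Ndim H Vn) (mpow n Hn (2 * k)))
                   (mm Ndim (tr Vn) H)) y).
End Setup.

(* Main.v *)
Require Import Defs.
From Stdlib Require Import Reals List Arith Lia Lra Classical.
Open Scope R_scope.

Lemma sumR_ext n f g : (forall i, (i<n)%nat -> f i = g i) -> sumR n f = sumR n g.
Proof. induction n; intros E; simpl; [reflexivity|]. rewrite IHn, E; auto; intros; apply E; lia. Qed.
Lemma sumR_plus n f g : sumR n (fun i => f i + g i) = sumR n f + sumR n g.
Proof. induction n; simpl; [lra|]. rewrite IHn; ring. Qed.
Lemma sumR_scal_l n c f : sumR n (fun i => c * f i) = c * sumR n f.
Proof. induction n; simpl; [ring|]. rewrite IHn; ring. Qed.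
Lemma sumR_scal_r n c f : sumR n (fun i => f i * c) = sumR n f * c.
Proof. induction n; simpl; [ring|]. rewrite IHn; ring. Qed.
Lemma sumR_opp n f : sumR n (fun i => - f i) = - sumR n f.
Proof. induction n; simpl; [ring|]. rewrite IHn; ring. Qed.
Lemma sumR_zero n : sumR n (fun _ => 0) = 0.
Proof. induction n; simpl; [ring|]. rewrite IHn; ring. Qed.
Lemma sumR_swap n m (f : nat -> nat -> R) :
  sumR n (fun i => sumR m (fun j => f i j)) = sumR m (fun j => sumR n (fun i => f i j)).
Proof. induction n; simpl. - now rewrite sumR_zero. - rewrite IHn, sumR_plus; reflexivity. Qed.
Lemma sumR_delta K i f : (i<K)%nat -> sumR K (fun l => (if Nat.eqb i l then 1 else 0) * f l) = f i.
Proof.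
  induction K; intros Hi; [lia|]. simpl.
  destruct (Nat.eq_dec i K) as [->|Hne].
  - rewrite Nat.eqb_refl. rewrite (sumR_ext _ _ (fun _ => 0)), sumR_zero; [ring|].
    intros l Hl. destruct (Nat.eqb_spec K l); [lia|ring].
  - rewrite IHK by lia. destruct (Nat.eqb_spec i K); [lia|ring].
Qed.
Lemma sumR_delta_r K j f : (j<K)%nat -> sumR K (fun l => f l * (if Nat.eqb l j then 1 else 0)) = f j.
Proof.
  intros Hj. rewrite <- (sumR_delta K j f Hj). apply sumR_ext; intros l _.
  rewrite Nat.eqb_sym; ring.
Qed.

Lemma dot_ext N a b c d : (forall i, (i<N)%nat -> a i = c i) -> (forall i, (i<N)%nat -> b i = d i) ->
  dot N a b = dot N c d.
Proof. intros E1 E2; unfold dot; apply sumR_ext; intros; rewrite E1, E2; auto. Qed.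
Lemma mv_ext N M M' x x' i : (forall j, (j<N)%nat -> M i j = M' i j) -> (forall j, (j<N)%nat -> x j = x' j) ->
  mv N M x i = mv N M' x' i.
Proof. intros E1 E2; unfold mv; apply sumR_ext; intros; rewrite E1, E2; auto. Qed.

Lemma mv_mm N K A B y i : mv N (mm K A B) y i = mv K A (mv N B y) i.
Proof.
  unfold mv, mm.
  rewrite (sumR_ext N _ (fun j => sumR K (fun l => A i l * B l j * y j))).
  2:{ intros; now rewrite <- sumR_scal_r. }
  rewrite sumR_swap. apply sumR_ext; intros l _. rewrite <- sumR_scal_l.
  apply sumR_ext; intros; ring.
Qed.

Lemma dot_mv_swap N K x A u :
  dot N x (mv K A u) = dot K (fun l => sumR N (fun i => x i * A i l)) u.
Proof.
  unfold dot, mv.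
  rewrite (sumR_ext N _ (fun i => sumR K (fun l => x i * A i l * u l))).
  2:{ intros; rewrite <- sumR_scal_l; apply sumR_ext; intros; ring. }
  rewrite sumR_swap. apply sumR_ext; intros l _. now rewrite <- sumR_scal_r.
Qed.

Lemma dot_comm N x y : dot N x y = dot N y x.
Proof. unfold dot; apply sumR_ext; intros; ring. Qed.

Lemma dot_mv_l N A x y : dot N (mv N A x) y = dot N x (mv N (tr A) y).
Proof.
  rewrite dot_comm, dot_mv_swap, dot_comm. apply dot_ext; intros; auto.
  unfold mv, tr; apply sumR_ext; intros; ring.
Qed.

Lemma mm_assoc K A B C i j : mm K (mm K A B) C i j = mm K A (mm K B C) i j.
Proof.
  unfold mm.
  rewrite (sumR_ext K _ (fun l => sumR K (fun p => A i p * B p l * C l j))).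
  2:{ intros; now rewrite <- sumR_scal_r. }
  rewrite sumR_swap. apply sumR_ext; intros p _. rewrite <- sumR_scal_l.
  apply sumR_ext; intros; ring.
Qed.

Lemma mpow_comm K A p i j : (i<K)%nat -> (j<K)%nat ->
  mm K (mpow K A p) A i j = mm K A (mpow K A p) i j.
Proof.
  revert i j; induction p; intros i j Hi Hj; simpl.
  - unfold mm, idm. rewrite sumR_delta by auto. now rewrite sumR_delta_r.
  - rewrite mm_assoc. unfold mm at 1 3. apply sumR_ext; intros l Hl.
    f_equal. now apply IHp.
Qed.

Lemma bil_skew N K x y : (forall b c, (b<N)%nat -> (c<N)%nat -> K c b = - K b c) ->
  dot N x (mv N K y) = - dot N y (mv N K x).
Proof.
  intros Hs. rewrite dot_mv_swap. unfold dot. rewrite <- sumR_opp.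
  apply sumR_ext; intros c Hc. unfold mv. rewrite <- sumR_scal_r, <- sumR_scal_l, <- sumR_opp.
  apply sumR_ext; intros b Hb. rewrite (Hs b c) by auto. ring.
Qed.

Lemma J_skew m a d : (a < 2*m)%nat -> (d < 2*m)%nat -> Jmat m a d = - Jmat m d a.
Proof.
  intros Ha Hd. unfold Jmat.
  repeat match goal with
  | |- context [Nat.ltb ?x ?y] => destruct (Nat.ltb_spec x y)
  | |- context [Nat.eqb ?x ?y] => destruct (Nat.eqb_spec x y)
  end; first [lra | exfalso; lia].
Qed.

Section Orth.
Variables (N : nat) (H : Mat).
Hypothesis Hsym : symmetric N H.

Lemma ipH_sym x y : ipH N H x y = ipH N H y x.
Proof.
  unfold ipH. rewrite dot_mv_swap. unfold dot. apply sumR_ext; intros i Hi.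
  unfold mv. rewrite Rmult_comm. f_equal. apply sumR_ext; intros j Hj.
  rewrite (Hsym j i) by auto. ring.
Qed.
Lemma ipH_sub x w u : ipH N H x (vsub w u) = ipH N H x w - ipH N H x u.
Proof.
  unfold ipH, dot, mv, vsub. rewrite <- (sumR_ext N (fun i => x i * sumR N (fun j => H i j * w j) - x i * sumR N (fun j => H i j * u j)) ).
  - unfold Rminus. rewrite sumR_plus, sumR_opp. reflexivity.
  - intros i _. rewrite <- Rmult_minus_distr_l. f_equal. unfold Rminus.
    rewrite <- sumR_opp, <- sumR_plus. apply sumR_ext; intros; ring.
Qed.
Lemma ipH_scale x c u : ipH N H x (vscale c u) = c * ipH N H x u.
Proof.
  unfold ipH, dot, mv, vscale. rewrite <- sumR_scal_l. apply sumR_ext; intros i _.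
  rewrite (sumR_ext _ _ (fun j => c * (H i j * u j))) by (intros; ring).
  rewrite sumR_scal_l; ring.
Qed.

Definition ON (l : list Vec) := forall p q, (p < length l)%nat -> (q < length l)%nat ->
  ipH N H (nth p l vzero) (nth q l vzero) = if Nat.eqb p q then 1 else 0.

Lemma mgs_orth_keep vs : forall w y, (forall v, In v vs -> ipH N H y v = 0) ->
  ipH N H y (mgs N H vs w) = ipH N H y w.
Proof.
  induction vs as [|v vs IH]; intros w y Hy; simpl; [reflexivity|].
  rewrite IH by (intros; apply Hy; simpl; auto).
  rewrite ipH_sub, ipH_scale, (Hy v) by (simpl; auto). ring.
Qed.

Lemma mgs_orth vs : forall w, ON vs -> forall p, (p < length vs)%nat ->
  ipH N H (nth p vs vzero) (mgs N H vs w) = 0.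
Proof.
  induction vs as [|v vs IH]; intros w Hon p Hp; simpl in Hp; [lia|].
  simpl mgs. destruct p as [|p].
  - simpl nth. rewrite mgs_orth_keep.
    + rewrite ipH_sub, ipH_scale. pose proof (Hon 0%nat 0%nat) as E. simpl in E. rewrite E by lia. ring.
    + intros v' Hin. destruct (In_nth vs v' vzero Hin) as [q [Hq <-]].
      apply (Hon 0%nat (S q)); simpl; lia.
  - simpl nth. apply IH; [|lia].
    intros a b Ha Hb. apply (Hon (S a) (S b)); simpl; lia.
Qed.

Hypothesis Hpd : pos_def N H.

Lemma ipH_pos x : ipH N H x x <> 0 -> 0 < ipH N H x x.
Proof.
  intros Hne. destruct (classic (exists i, (i < N)%nat /\ x i <> 0)) as [Ex|Nex].
  - now apply Hpd.
  - exfalso; apply Hne. unfold ipH, dot.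
    rewrite (sumR_ext _ _ (fun _ => 0)); [apply sumR_zero|].
    intros i Hi. destruct (Req_dec (x i) 0) as [->|Hx]; [ring|].
    exfalso; apply Nex; eauto.
Qed.

Lemma ipH_norm w : ipH N H w w <> 0 ->
  ipH N H (vscale (/ sqrt (ipH N H w w)) w) (vscale (/ sqrt (ipH N H w w)) w) = 1.
Proof.
  intros Hne. pose proof (ipH_pos w Hne) as Hp.
  rewrite ipH_scale, (ipH_sym (vscale _ w) w), ipH_scale.
  pose proof (sqrt_lt_R0 _ Hp). pose proof (sqrt_sqrt _ (Rlt_le _ _ Hp)).
  set (s := ipH N H w w) in *. set (q := sqrt s) in *.
  rewrite <- H1. field. lra.
Qed.

End Orth.

Lemma arnoldi_len N A H y0 j : length (arnoldi N A H y0 j) = S j.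
Proof. induction j; simpl; auto. rewrite length_app, IHj; simpl; lia. Qed.

Lemma arnoldi_ON N A H y0 n : symmetric N H -> pos_def N H -> no_breakdown N n A H y0 ->
  forall j, (j < n)%nat -> ON N H (arnoldi N A H y0 j).
Proof.
  intros Hs Hp [Hy0 Hw]. induction j; intros Hj.
  - intros p q Hp' Hq'. simpl in Hp', Hq'. destruct p; [|lia]. destruct q; [|lia].
    simpl. now apply ipH_norm.
  - simpl. set (vs := arnoldi N A H y0 j) in *. set (w := arnoldi_w N A H vs).
    assert (Hon : ON N H vs) by (apply IHj; lia).
    assert (Hww : ipH N H w w <> 0) by (apply Hw; lia).
    assert (Hlen : length vs = S j) by apply arnoldi_len.
    assert (Hort : forall p, (p < length vs)%nat ->
              ipH N H (nth p vs vzero) (vscale (/ sqrt (ipH N H w w)) w) = 0).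
    { intros p Hp'. rewrite ipH_scale. unfold w, arnoldi_w. rewrite mgs_orth; auto. ring. }
    intros p q Hp' Hq'. rewrite length_app in Hp', Hq'. simpl in Hp', Hq'.
    destruct (Nat.lt_ge_cases p (length vs)) as [Hpl|Hpl];
    destruct (Nat.lt_ge_cases q (length vs)) as [Hql|Hql].
    + rewrite !app_nth1 by auto. now apply Hon.
    + assert (q = length vs) by lia. subst q. rewrite app_nth1 by auto.
      rewrite app_nth2, Nat.sub_diag by lia. simpl. rewrite Hort by auto.
      destruct (Nat.eqb_spec p (length vs)); [lia|reflexivity].
    + assert (p = length vs) by lia. subst p. rewrite (app_nth1 _ _ _ Hql).
      rewrite app_nth2, Nat.sub_diag by lia. simpl. rewrite ipH_sym by auto. rewrite Hort by auto.
      destruct (Nat.eqb_spec (length vs) q); [lia|reflexivity].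
    + assert (p = length vs) by lia. assert (q = length vs) by lia. subst p q.
      rewrite app_nth2, Nat.sub_diag by lia. simpl. rewrite Nat.eqb_refl.
      now apply ipH_norm.
Qed.

Lemma deriv_sumR n (f : nat -> R -> R) (d : nat -> R) t :
  (forall i, (i<n)%nat -> derivable_pt_lim (f i) t (d i)) ->
  derivable_pt_lim (fun s => sumR n (fun i => f i s)) t (sumR n d).
Proof.
  induction n; intros Hd; simpl.
  - exact (derivable_pt_lim_const 0 t).
  - exact (derivable_pt_lim_plus _ _ t _ _ (IHn (fun i Hi => Hd i ltac:(lia))) (Hd n ltac:(lia))).
Qed.

Lemma lim_eq f t l l' : derivable_pt_lim f t l -> l = l' -> derivable_pt_lim f t l'.
Proof. intros; subst; auto. Qed.

Lemma quad_red N n H V Mk w : symmetric N H ->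
  (forall p q, (p<n)%nat -> (q<n)%nat ->
     ipH N H (fun i => V i p) (fun i => V i q) = if Nat.eqb p q then 1 else 0) ->
  dot N (mv n V w) (mv N (mm n (mm n (mm N H V) Mk) (mm N (tr V) H)) (mv n V w))
  = dot n w (mv n Mk w).
Proof.
  intros Hs Hcol.
  assert (Hu : forall p, (p<n)%nat -> mv N (mm N (tr V) H) (mv n V w) p = w p).
  { intros p Hp. rewrite mv_mm.
    transitivity (dot N (fun b => V b p) (mv n (mm N H V) w)).
    { unfold mv at 1, dot. apply sumR_ext; intros b _. unfold tr.
      rewrite <- (mv_mm n N H V w b). reflexivity. }
    rewrite dot_mv_swap.
    transitivity (dot n (fun l => if Nat.eqb p l then 1 else 0) w).
    { apply dot_ext; intros; auto. exact (Hcol p i Hp H0). }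
    unfold dot; apply sumR_delta; auto. }
  transitivity (dot N (mv n V w) (mv n (mm N H V) (mv n Mk (mv N (mm N (tr V) H) (mv n V w))))).
  { apply dot_ext; intros; auto. rewrite mv_mm, mv_mm. reflexivity. }
  rewrite dot_mv_swap. apply dot_ext.
  - intros l Hl. rewrite <- Hu by auto. unfold mv at 2.
    apply sumR_ext; intros i Hi. unfold mm, tr.
    rewrite <- sumR_scal_l, <- sumR_scal_r. apply sumR_ext; intros b Hb.
    rewrite (Hs i b) by auto. ring.
  - intros i Hi. apply mv_ext; intros; auto.
Qed.

Lemma K_skew m H : symmetric (2*m) H -> forall b c, (b < 2*m)%nat -> (c < 2*m)%nat ->
  mm (2*m) H (mm (2*m) (Jmat m) H) c b = - mm (2*m) H (mm (2*m) (Jmat m) H) b c.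
Proof.
  intros Hs b c Hb Hc. unfold mm.
  rewrite (sumR_ext _ _ (fun a => sumR (2*m) (fun d => H c a * (Jmat m a d * H d b))))
    by (intros; apply eq_sym, sumR_scal_l).
  rewrite sumR_swap, <- sumR_opp. apply sumR_ext; intros x Hx.
  rewrite <- sumR_scal_l, <- sumR_opp. apply sumR_ext; intros y Hy.
  rewrite (J_skew m y x), (Hs c y), (Hs x b) by auto. ring.
Qed.

Theorem proposition2 (m n : nat) (H : Mat) (y0 : Vec)
  (Hsym : symmetric (Ndim m) H) (Hpd : pos_def (Ndim m) H)
  (Hnb : no_breakdown (Ndim m) n (Amat m H) H y0)
  (z : R -> Vec)
  (Hode : forall (t : R) (i : nat), (i < n)%nat ->
     derivable_pt_lim (fun s => z s i) t
       (sumR n (fun j => Hn m n H y0 i j * z t j)))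
  (Hinit : forall i : nat, (i < n)%nat -> z 0 i = z0 m n H y0 i) :
  forall k : nat, (2 * (k + 1) <= n)%nat ->
  forall t1 t2 : R,
    Hk m n H y0 k (yH m n H y0 (z t1)) = Hk m n H y0 k (yH m n H y0 (z t2)).
Proof.
  intros k Hkn t1 t2.
  set (N := Ndim m) in *.
  set (V := Vn m n H y0).
  set (Hm := Hn m n H y0).
  set (M := mpow n Hm (2*k)).
  assert (Hcol : forall p q, (p<n)%nat -> (q<n)%nat ->
     ipH N H (fun i => V i p) (fun i => V i q) = if Nat.eqb p q then 1 else 0).
  { intros p q Hp Hq.
    pose proof (arnoldi_ON N (Amat m H) H y0 n Hsym Hpd Hnb (n-1) ltac:(lia)) as Hon.
    pose proof (arnoldi_len N (Amat m H) H y0 (n-1)) as Hl.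
    apply Hon; rewrite Hl; lia. }
  assert (Hred : forall w, Hk m n H y0 k (yH m n H y0 w) = / 2 * dot n w (mv n M w)).
  { intros w. unfold Hk. change (yH m n H y0 w) with (mv n V w).
    f_equal. apply quad_red; auto. }
  assert (Hskew : forall p q, Hm q p = - Hm p q).
  { assert (E : forall p q, Hm p q =
      dot N (fun i => V i p) (mv N (mm N H (Amat m H)) (fun i => V i q))).
    { intros p q. transitivity (dot N (fun i => V i p) (mv N H (mv N (Amat m H) (fun i => V i q)))).
      { rewrite dot_mv_swap. reflexivity. }
      apply dot_ext; intros; auto. symmetry; apply mv_mm. }
    intros p q. rewrite !E. apply bil_skew.
    intros b c Hb Hc. apply K_skew; auto. }
  assert (Hd : forall t, derivable_pt_lim (fun s => dot n (z s) (mv n M (z s))) t 0).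
  { intros t.
    assert (Hinner : forall p, (p < n)%nat ->
      derivable_pt_lim (fun s => mv n M (z s) p) t (mv n M (mv n Hm (z t)) p)).
    { intros p Hp. apply (deriv_sumR n (fun j s => M p j * z s j) (fun j => M p j * mv n Hm (z t) j)).
      intros j Hj. exact (derivable_pt_lim_scal (fun s => z s j) (M p j) t _ (Hode t j Hj)). }
    eapply lim_eq.
    - apply (deriv_sumR n (fun p s => z s p * mv n M (z s) p)
        (fun p => mv n Hm (z t) p * mv n M (z t) p + z t p * mv n M (mv n Hm (z t)) p)).
      intros p Hp.
      exact (derivable_pt_lim_mult (fun s => z s p) (fun s => mv n M (z s) p) t _ _
               (Hode t p Hp) (Hinner p Hp)).
    - rewrite sumR_plus.
      change (dot n (mv n Hm (z t)) (mv n M (z t)) + dot n (z t) (mv n M (mv n Hm (z t))) = 0).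
      rewrite dot_mv_l. unfold dot. rewrite <- sumR_plus.
      rewrite (sumR_ext _ _ (fun _ => 0)); [apply sumR_zero|].
      intros i Hi. rewrite <- !mv_mm.
      assert (X : mv n (mm n (tr Hm) M) (z t) i = - mv n (mm n M Hm) (z t) i).
      { unfold mv. rewrite <- sumR_opp. apply sumR_ext; intros j Hj.
        rewrite (mpow_comm n Hm (2*k) i j Hi Hj : mm n M Hm i j = _).
        unfold mm at 1. unfold tr.
        rewrite (sumR_ext _ _ (fun l => - (Hm i l * M l j))) by (intros; rewrite Hskew; ring).
        rewrite sumR_opp. change (mm n Hm (mpow n Hm (2*k)) i j) with (mm n Hm M i j).
        unfold mm. ring. }
      rewrite X. ring. }
  pose (pr := fun t => exist (fun l => derivable_pt_abs (fun s => dot n (z s) (mv n M (z s))) t l) 0 (Hd t)).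
  assert (C := null_derivative_1 _ pr (fun t => eq_refl)).
  rewrite !Hred. f_equal. apply C.
Qed.
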